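(* Let $p \in (0,1)$, $m \geq 2$, and let $f : \{0,1\}^m \to \{0,1\}$. Let $\pi : [m] \to [m-1]$ be the map with $\pi(m-1) = \pi(m) = m-1$ and $\pi(i) = i$ for every $i \in [m-2]$. Then \[ \mathrm{Inf}^{(p)}[f^\pi, m-1] \geq \min(p,1-p) \cdot \mathrm{Inf}^{(p)}[f, m-1] - \frac{1}{\min(p,1-p)} \cdot \mathrm{Inf}^{(p)}[f, m]. \]
   Context: For $p \in (0,1)$, $\mu_{p,n}$ is the product $p$-biased distribution on $\{0,1\}^n$. For $g : \{0,1\}^n \to \{0,1\}$ and $i \in [n]$, $\mathrm{Inf}^{(p)}[g,i] = \mathbb{E}_{x \sim \mu_{p,n}}\big[(g(x) - \mathbb{E}_{s\sim\mu_{p,1}}[g(x^{i\to s})])^2\big] = p(1-p)\Pr_{x\sim\mu_{p,n}}[g(x)\neq g(x\oplus i)]$, where $x^{i\to s}$ is $x$ with coordinate $i$ set to $s$ and $x\oplus i$ is $x$ with coordinate $i$ flipped. For $\pi:[m]\to[k]$, the minor $f^\pi:\{0,1\}^k\to\{0,1\}$ is $f^\pi(y) = f(y_{\pi(1)},\dots,y_{\pi(m)})$. Influences of $f^\pi$ are taken with respect to $\mu_{p,m-1}$ and those of $f$ with respect to $\mu_{p,m}$. *)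

(* Defs.v *)
From HB Require Import structures.
From mathcomp Require Import all_boot all_order all_algebra.
Set Implicit Arguments. Unset Strict Implicit. Unset Printing Implicit Defensive.
Import Order.TTheory GRing.Theory Num.Theory.
Local Open Scope ring_scope.

(* The Boolean cube {0,1}^n, coordinates indexed by 'I_n (0-based). *)
Definition cube (n : nat) := {ffun 'I_n -> bool}.

Definition mu (R : ringType) (p : R) (n : nat) (x : cube n) : R :=
  \prod_(i < n) (if x i then p else 1 - p).

Definition setc (n : nat) (x : cube n) (i : 'I_n) (s : bool) : cube n :=
  [ffun j => if j == i then s else x j].

Definition Inf (R : ringType) (p : R) (n : nat) (g : cube n -> bool) (i : 'I_n) : R :=
  \sum_(x : cube n) mu p x *
    ((g x)%:R - (p * (g (setc x i true))%:R + (1 - p) * (g (setc x i false))%:R)) ^+ 2.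

Definition minor (m k : nat) (f : cube m -> bool) (pi : 'I_m -> 'I_k) : cube k -> bool :=
  fun y => f [ffun i => y (pi i)].

(* For m = n.+2: the map [m] -> [m-1] identifying the last two coordinates
   (0-based: i |-> min(i, n)). *)
Definition merge_last (n : nat) (i : 'I_n.+2) : 'I_n.+1 := inord (minn i n).

(* Main.v *)
Require Import Defs.
From HB Require Import structures.
From mathcomp Require Import all_boot all_order all_algebra.
From mathcomp Require Import ring lra.
Import Order.TTheory GRing.Theory Num.Theory.
Set Implicit Arguments. Unset Strict Implicit. Unset Printing Implicit Defensive.
Local Open Scope ring_scope.

Definition ext n (y : cube n) (b : bool) : cube n.+1 :=
  [ffun i => if unlift ord_max i is Some j then y j else b].

Lemma ext_max n (y : cube n) b : ext y b ord_max = b.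
Proof. by rewrite /ext ffunE unlift_none. Qed.

Lemma ext_lift n (y : cube n) b j : ext y b (lift ord_max j) = y j.
Proof. by rewrite /ext ffunE liftK. Qed.

Lemma mu_ext (R : ringType) (p : R) n (y : cube n) b :
  mu p (ext y b) = mu p y * (if b then p else 1 - p).
Proof.
rewrite /mu big_ord_recr /= ext_max; congr (_ * _).
apply: eq_bigr => i _.
have -> : widen_ord (leqnSn n) i = lift ord_max i.
  by apply: val_inj; rewrite /= /bump leqNgt ltn_ord.
by rewrite ext_lift.
Qed.

Lemma sum_ext (R : comRingType) (p : R) n (F : cube n.+1 -> R) :
  \sum_x mu p x * F x =
  \sum_(z : cube n) mu p z * \sum_(b : bool) (if b then p else 1 - p) * F (ext z b).
Proof.
under [RHS]eq_bigr => z _ do rewrite big_distrr /=.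
rewrite pair_big /=.
rewrite (reindex (fun u : cube n * bool => ext u.1 u.2)) /=.
  apply: eq_bigr => u _; by rewrite mu_ext mulrA.
exists (fun x : cube n.+1 => ([ffun j => x (lift ord_max j)], x ord_max)).
  move=> [y b] _ /=; rewrite ext_max; congr pair; apply/ffunP => j.
  by rewrite ffunE ext_lift.
move=> x _ /=; apply/ffunP => i; rewrite /ext ffunE.
by case: unliftP => [j ->|->] //; rewrite ffunE.
Qed.

Lemma inord_lift n : (inord n : 'I_n.+2) = lift ord_max (ord_max : 'I_n.+1).
Proof. by apply: val_inj; rewrite /= inordK // /bump ltnn. Qed.

Lemma lift_neqF n (i : 'I_n.+1) j : (lift i j == i) = false.
Proof. by rewrite eq_sym (negbTE (neq_lift _ _)). Qed.

Lemma setc_max n (y : cube n) b s : setc (ext y b) ord_max s = ext y s.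
Proof.
apply/ffunP => i; rewrite /setc !ffunE.
case: unliftP => [j ->|->]; last by rewrite eqxx ?unlift_none ?ext_max.
by rewrite ?liftK ?ext_lift lift_neqF.
Qed.

Lemma setc_n n (z : cube n) a b s :
  setc (ext (ext z a) b) (inord n) s = ext (ext z s) b.
Proof.
apply/ffunP => i; rewrite /setc ffunE inord_lift.
case: (unliftP ord_max i) => [j ->|->]; last first.
  by rewrite eq_sym lift_neqF !ext_max.
rewrite (inj_eq (@lift_inj _ _)) !ext_lift.
case: (unliftP ord_max j) => [k ->|->]; last by rewrite eqxx ext_max.
by rewrite lift_neqF !ext_lift.
Qed.

Lemma merge_lift n (j : 'I_n.+1) : merge_last (lift ord_max j) = j.
Proof.
apply: val_inj; rewrite /merge_last /= /bump leqNgt ltn_ord add0n.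
by rewrite inordK; [apply/minn_idPl; rewrite -ltnS | rewrite ltnS geq_minr].
Qed.

Lemma merge_max n : merge_last (ord_max : 'I_n.+2) = ord_max.
Proof.
by apply: val_inj; rewrite /merge_last /= inordK; [apply/minn_idPr|rewrite ltnS geq_minr].
Qed.

Lemma minor_ext n (f : cube n.+2 -> bool) (z : cube n) a :
  minor f (@merge_last n) (ext z a) = f (ext (ext z a) a).
Proof.
rewrite /minor; congr f; apply/ffunP => i; rewrite ffunE.
case: (unliftP ord_max i) => [j ->|->].
  by rewrite merge_lift ext_lift.
by rewrite merge_max !ext_max.
Qed.

Theorem mainTheorem3 (R : realFieldType) (p : R) (n : nat)
    (f : cube n.+2 -> bool) :
  0 < p -> p < 1 ->
  Inf p (minor f (@merge_last n)) (ord_max : 'I_n.+1) >=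
    Num.min p (1 - p) * Inf p f (inord n : 'I_n.+2)
    - (Num.min p (1 - p))^-1 * Inf p f (ord_max : 'I_n.+2).
Proof.
move=> p0 p1; rewrite /Inf !sum_ext.
rewrite !mulr_sumr -sumrB; apply: ler_sum => z _.
rewrite mulrCA [X in _ - X]mulrCA -mulrBr.
apply: ler_wpM2l; first by apply: prodr_ge0 => i _; case: ifP => _; lra.
rewrite !big_bool /= !setc_max !setc_n !minor_ext.
have t0 : 0 < Num.min p (1 - p) by rewrite lt_min p0 subr_gt0.
have tp : Num.min p (1 - p) <= p by rewrite ge_min lexx.
have tq : Num.min p (1 - p) <= 1 - p by rewrite ge_min lexx orbT.
have tu : Num.min p (1 - p) * (Num.min p (1 - p))^-1 = 1 by rewrite mulfV // gt_eqF.
move: (Num.min p (1 - p)) (Num.min p (1 - p))^-1 t0 tp tq tu => t u t0 tp tq tu.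
have u1 : 1 <= u * p by nra.
have u2 : 1 <= u * (1 - p) by nra.
have t1 : t * p <= 1 by nra.
have t2 : t * (1 - p) <= 1 by nra.
move: (f (ext (ext z true) true)) (f (ext (ext z true) false)) (f (ext (ext z false) true)) (f (ext (ext z false) false)) => a b c d.
set q := 1 - p.
have r0 : 0 < p * q by rewrite /q; nra.
have EW : p * ((a%:R - (p * a%:R + q * d%:R)) ^+ 2) + q * ((d%:R - (p * a%:R + q * d%:R)) ^+ 2)
   = p * q * (d != a)%:R.
  by rewrite /q; case: a; case: d => /=; ring.
have EX : p * (p * ((a%:R - (p * a%:R + q * c%:R)) ^+ 2) + q * ((b%:R - (p * b%:R + q * d%:R)) ^+ 2))
        + q * (p * ((c%:R - (p * a%:R + q * c%:R)) ^+ 2) + q * ((d%:R - (p * b%:R + q * d%:R)) ^+ 2))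
   = p * q * (q * (d != b)%:R + p * (c != a)%:R).
  by clear EW; rewrite /q; case: a; case: b; case: c; case: d => /=; ring.
have EY : p * (p * ((a%:R - (p * a%:R + q * b%:R)) ^+ 2) + q * ((b%:R - (p * a%:R + q * b%:R)) ^+ 2))
        + q * (p * ((c%:R - (p * c%:R + q * d%:R)) ^+ 2) + q * ((d%:R - (p * c%:R + q * d%:R)) ^+ 2))
   = p * q * (q * (d != c)%:R + p * (b != a)%:R).
  by clear EW EX; rewrite /q; case: a; case: b; case: c; case: d => /=; ring.
rewrite EW EX EY.
rewrite mulrCA [X in _ - X]mulrCA -mulrBr; apply: ler_wpM2l; first exact: ltW.
clear EW EX EY; case: a; case: b; case: c; case: d => /=; rewrite /q; nra.
Qed.
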